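(* There exists a rational Diophantine sextuple. Specifically, the set $$\left\{ \tfrac{11}{192},\ \tfrac{35}{192},\ \tfrac{155}{27},\ \tfrac{512}{27},\ \tfrac{1235}{48},\ \tfrac{180873}{16} \right\}$$ consists of six distinct positive rational numbers such that for any two distinct elements $x, y$ of the set, $xy+1$ is the square of a rational number.
   Context: A rational Diophantine $m$-tuple is a set of $m$ distinct positive rational numbers such that the product of any two distinct elements, plus $1$, is the square of a rational number. A sextuple is the case $m=6$. *)

(* Defs.v *)
From mathcomp Require Import all_boot all_order all_algebra.
Set Implicit Arguments. Unset Strict Implicit. Unset Printing Implicit Defensive.
Import Order.TTheory GRing.Theory Num.Theory.
Local Open Scope ring_scope.

Definition rat_diophantine_tuple (m : nat) (s : seq rat) : Prop :=
  [/\ size s = m, uniq s,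
      (forall x, x \in s -> 0 < x) &
      (forall x y, x \in s -> y \in s -> x != y ->
         exists r : rat, x * y + 1 = r ^+ 2)].

Definition rat_diophantine_sextuple (s : seq rat) : Prop :=
  rat_diophantine_tuple 6 s.

(* Main.v *)
Require Import Defs.
From mathcomp Require Import all_boot all_order all_algebra.
From mathcomp Require Import ring lra.
Import Order.TTheory GRing.Theory Num.Theory.
Local Open Scope ring_scope.

Ltac fsolve := field; rewrite ?mulf_neq0 ?pnatr_eq0 ?expf_neq0 //.

Lemma mem6 (T : eqType) (x a b c d e f : T) :
  x \in [:: a; b; c; d; e; f] ->
  x = a \/ x = b \/ x = c \/ x = d \/ x = e \/ x = f.
Proof.
rewrite !inE => /orP[/eqP->|/orP[/eqP->|/orP[/eqP->|/orP[/eqP->|/orP[/eqP->|/eqP->]]]]]; tauto.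
Qed.

Theorem mainTheorem1 :
  (exists s : seq rat, rat_diophantine_sextuple s) /\
  rat_diophantine_sextuple
    [:: 11%Q / 192%Q; 35%Q / 192%Q; 155%Q / 27%Q; 512%Q / 27%Q;
        1235%Q / 48%Q; (81%Q * 2233%Q) / 16%Q].
Proof.
suff H : rat_diophantine_sextuple
    [:: 11%Q / 192%Q; 35%Q / 192%Q; 155%Q / 27%Q; 512%Q / 27%Q;
        1235%Q / 48%Q; (81%Q * 2233%Q) / 16%Q].
  by split; [exists [:: 11%Q / 192%Q; 35%Q / 192%Q; 155%Q / 27%Q; 512%Q / 27%Q;
        1235%Q / 48%Q; (81%Q * 2233%Q) / 16%Q] |].
have e11 : 11%Q = 11%:R by reflexivity.
have e16 : 16%Q = 16%:R by reflexivity.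
have e27 : 27%Q = 27%:R by reflexivity.
have e35 : 35%Q = 35%:R by reflexivity.
have e48 : 48%Q = 48%:R by reflexivity.
have e81 : 81%Q = 81%:R by reflexivity.
have e155 : 155%Q = 155%:R by reflexivity.
have e192 : 192%Q = 192%:R by reflexivity.
have e512 : 512%Q = 512%:R by reflexivity.
have e1235 : 1235%Q = 1235%:R by reflexivity.
have e2233 : 2233%Q = 2233%:R by reflexivity.
rewrite e11 e16 e27 e35 e48 e81 e155 e192 e512 e1235 e2233.
split.
- reflexivity.
- apply: (sorted_uniq (@lt_trans _ _) (@ltxx _ _)).
  do 5 (apply/andP; split; first lra); reflexivity.
- move=> x /mem6 [->|[->|[->|[->|[->|->]]]]]; lra.
- move=> x y /mem6 Hx /mem6 Hy.
  case: Hx => [->|[->|[->|[->|[->|->]]]]]; case: Hy => [->|[->|[->|[->|[->|->]]]]] => Hne;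
    try (match goal with H : is_true (?a != ?a) |- _ => by rewrite eqxx in H end).
  + by exists (193%:R / 192%:R); fsolve.
  + by exists (83%:R / 72%:R); fsolve.
  + by exists (13%:R / 9%:R); fsolve.
  + by exists (151%:R / 96%:R); fsolve.
  + by exists (815%:R / 32%:R); fsolve.
  + by exists (193%:R / 192%:R); fsolve.
  + by exists (103%:R / 72%:R); fsolve.
  + by exists (19%:R / 9%:R); fsolve.
  + by exists (229%:R / 96%:R); fsolve.
  + by exists (1453%:R / 32%:R); fsolve.
  + by exists (83%:R / 72%:R); fsolve.
  + by exists (103%:R / 72%:R); fsolve.
  + by exists (283%:R / 27%:R); fsolve.
  + by exists (439%:R / 36%:R); fsolve.
  + by exists (1019%:R / 4%:R); fsolve.
  + by exists (13%:R / 9%:R); fsolve.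
  + by exists (19%:R / 9%:R); fsolve.
  + by exists (283%:R / 27%:R); fsolve.
  + by exists (199%:R / 9%:R); fsolve.
  + by exists (463%:R / 1%:R); fsolve.
  + by exists (151%:R / 96%:R); fsolve.
  + by exists (229%:R / 96%:R); fsolve.
  + by exists (439%:R / 36%:R); fsolve.
  + by exists (199%:R / 9%:R); fsolve.
  + by exists (8629%:R / 16%:R); fsolve.
  + by exists (815%:R / 32%:R); fsolve.
  + by exists (1453%:R / 32%:R); fsolve.
  + by exists (1019%:R / 4%:R); fsolve.
  + by exists (463%:R / 1%:R); fsolve.
  + by exists (8629%:R / 16%:R); fsolve.
Qed.
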